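(* Let $a\in\mathbb N$ and let $\mathfrak o$ be a compact discrete valuation ring with residue field cardinality $q$; put $t=q^{-s}$. Let $V_{1,a}(\mathfrak o)$ be the $\mathfrak o$-representation of the star quiver $\mathsf S_a$ in which every vertex is represented by $\mathfrak o$ and every arrow by the identity map. Then $$\zeta_{V_{1,a}(\mathfrak o)}(s)=\frac{C_{a-1}(t,t)}{\prod_{i=1}^{a}(1-t^i)}.$$
   Context: The star quiver $\mathsf S_a$ has vertices $v_1,\dots,v_a$ and $a-1$ arrows $v_1\to v_j$ ($j=2,\dots,a$). For a representation $V=(\mathcal L_\iota,f_\phi)$, a subrepresentation is a tuple of submodules $\Lambda_\iota\le\mathcal L_\iota$ with $f_\phi(\Lambda_{\mathrm{tail}(\phi)})\subseteq\Lambda_{\mathrm{head}(\phi)}$, and $\zeta_V(s)=\sum_{V'}\prod_\iota|\mathcal L_\iota:\Lambda_\iota|^{-s}$ over finite-index subrepresentations. Carlitz' $q$-Eulerian polynomial is $C_{m}(x,y)=\sum_{w\in S_{m}}x^{\mathrm{des}(w)}y^{\mathrm{maj}(w)}$, where for $w\in S_m$, $\mathrm{des}(w)=|\{i\in[m-1]:w(i)>w(i+1)\}|$ and $\mathrm{maj}(w)=\sum_{i: w(i)>w(i+1)}i$ (with $C_0=1$). *)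

(* Defs.v *)
From Stdlib Require Import Reals List.
From mathcomp Require Import all_boot all_order all_algebra all_fingroup.
Set Implicit Arguments. Unset Strict Implicit. Unset Printing Implicit Defensive.

Import GRing.Theory.

Section Ring.
Local Open Scope ring_scope.
Variable O : idomainType.

Definition divides (x y : O) : Prop := exists r : O, y = (r * x)%R.

Definition dvr_uniformizer (pi : O) : Prop :=
  pi <> 0%R /\ ~ (pi \is a GRing.unit) /\
  forall x : O, x <> 0%R ->
    exists (u : O) (k : nat), u \is a GRing.unit /\ x = (u * pi ^+ k)%R.

Definition pi_complete (pi : O) : Prop :=
  forall x : nat -> O,
    (forall n, divides (pi ^+ n) (x n.+1 - x n)%R) ->
    exists y : O, forall n, divides (pi ^+ n) (y - x n)%R.

Definition submodule (L : O -> Prop) : Prop :=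
  L 0%R /\ (forall x y, L x -> L y -> L (x + y)%R) /\
  (forall r x, L x -> L (r * x)%R).

(* |O : L| = n  (L has finite index n): a complete irredundant
   system of n coset representatives *)
Definition has_index (L : O -> Prop) (n : nat) : Prop :=
  exists s : seq O, size s = n /\
    (forall x : O, exists i, (i < n)%N /\ L (x - nth 0%R s i)%R) /\
    (forall i j, (i < n)%N -> (j < n)%N -> L (nth 0%R s i - nth 0%R s j)%R -> i = j).

(* O is a compact DVR with residue field of cardinality q
   (compact DVR = complete DVR with finite residue field) *)
Definition compact_dvr_residue (q : nat) : Prop :=
  exists pi : O, dvr_uniformizer pi /\ pi_complete pi /\
    has_index (divides pi) q.

(* ---------- the representation V_{1,a}(O) of the star quiver S_a ----------
   vertices v_1,...,v_a are 'I_a (v_1 = index 0), arrows v_1 -> v_j (j<>1),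
   each vertex represented by O and each arrow by the identity map. *)
Definition star_subrep (a : nat) (L : 'I_a -> O -> Prop) : Prop :=
  (forall i, submodule (L i)) /\
  (forall i j : 'I_a, nat_of_ord i = 0%N -> i <> j ->
     forall x, L i x -> L j x).

Definition total_index (a : nat) (L : 'I_a -> O -> Prop) (N : nat) : Prop :=
  exists n : 'I_a -> nat, (forall i, has_index (L i) (n i)) /\
    (\prod_(i < a) n i)%N = N.
End Ring.

Definition card_set (T : Type) (P : T -> Prop) (n : nat) : Prop :=
  exists l : list T, NoDup l /\ length l = n /\ forall x, P x <-> In x l.

(* ---------- Carlitz q-Eulerian polynomial ----------
   w : 'S_m acts on {0,...,m-1}; position j (0-based) is a descent if
   w j > w (j+1); its 1-based position is j+1. *)
Definition is_descent (m : nat) (w : 'S_m) (j : 'I_m) : bool :=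
  [exists k : 'I_m, (nat_of_ord k == j.+1) && (w k < w j)%N].

Definition des (m : nat) (w : 'S_m) : nat := #|[set j | is_descent w j]|.
Definition maj (m : nat) (w : 'S_m) : nat := (\sum_(j < m | is_descent w j) j.+1)%N.

Definition carlitz (m : nat) (x y : R) : R :=
  foldr Rplus R0 [seq Rmult (pow x (des w)) (pow y (maj w)) | w <- enum [set: 'S_m]].

Definition denom (a : nat) (t : R) : R :=
  foldr Rmult R1 [seq Rminus R1 (pow t i) | i <- iota 1 a].

(* Main.v *)
Require Import Defs.
From Stdlib Require Import Reals List.
From mathcomp Require Import all_boot all_order all_algebra all_fingroup.
From Stdlib Require Import FunctionalExtensionality PropExtensionality ClassicalEpsilon Classical.
From mathcomp Require Import Rstruct.
From mathcomp Require Import zify ring lra.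
Set Implicit Arguments. Unset Strict Implicit. Unset Printing Implicit Defensive.
Import Order.TTheory GRing.Theory Num.Theory.

Lemma ex_min_prop (P : nat -> Prop) :
  (exists n, P n) -> exists k, P k /\ forall j, P j -> (k <= j)%N.
Proof.
move=> [n Pn]; apply: NNPP => H.
have H2 : forall m j, (j <= m)%N -> ~ P j.
  elim=> [|m IH] j.
    rewrite leqn0 => /eqP -> P0; apply: H; exists 0%N; split => // i _.
  rewrite leq_eqVlt => /orP [/eqP -> Pm|]; last by rewrite ltnS; apply: IH.
  apply: H; exists m.+1; split => // i Pi; rewrite leqNgt; apply/negP => lt.
  by apply: (IH i) => //; rewrite -ltnS.
exact: (H2 n n (leqnn n)).
Qed.

Section Alg.
Local Open Scope ring_scope.
Variable O : idomainType.
Variable pi : O.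
Hypothesis pi0 : pi != 0.
Hypothesis pinu : pi \isn't a GRing.unit.
Hypothesis fact : forall x : O, x != 0 -> exists u k, u \is a GRing.unit /\ x = u * pi ^+ k.

Definition dv (k : nat) := divides (pi ^+ k).

Lemma submodule_dv k : submodule (dv k).
Proof.
split; first by exists 0; rewrite mul0r.
split.
  by move=> x y [r ->] [r' ->]; exists (r + r'); rewrite mulrDl.
by move=> r x [r' ->]; exists (r * r'); rewrite mulrA.
Qed.

Lemma sub_closed (L : O -> Prop) x y : submodule L -> L x -> L y -> L (x - y).
Proof.
move=> [_ [Hadd Hmul]] Lx Ly; apply: Hadd => //.
by rewrite -mulN1r; apply: Hmul.
Qed.

Lemma dv_mulpow k j y : (k <= j)%N -> dv k (y * pi ^+ j).
Proof.
move=> le; exists (y * pi ^+ (j - k)).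
by rewrite -mulrA -exprD subnK.
Qed.

Lemma dv_pow_inv k j y : y \is a GRing.unit -> dv k (y * pi ^+ j) -> (k <= j)%N.
Proof.
move=> uy [r Hr]; rewrite leqNgt; apply/negP => lt.
have E : pi ^+ k = pi ^+ (k - j) * pi ^+ j by rewrite -exprD subnK // ltnW.
rewrite E mulrA in Hr.
have := mulIf (expf_neq0 j pi0) Hr => Hy.
have : (r * pi ^+ (k - j)) \is a GRing.unit by rewrite -Hy.
rewrite unitrM => /andP [_]; rewrite unitrX_pos ?subn_gt0 //.
by move=> pu; move: pinu; rewrite pu.
Qed.

Lemma dv_pow k j : dv k (pi ^+ j) <-> (k <= j)%N.
Proof.
split; last by move=> le; rewrite -[pi ^+ j]mul1r; apply: dv_mulpow.
by rewrite -[pi ^+ j]mul1r; apply: dv_pow_inv; rewrite unitr1.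
Qed.

Lemma dv_mono j k x : (j <= k)%N -> dv k x -> dv j x.
Proof. by move=> le [r ->]; apply: dv_mulpow. Qed.

Lemma dv0 x : dv 0 x.
Proof. by exists x; rewrite expr0 mulr1. Qed.

Lemma pow_inj i j : pi ^+ i = pi ^+ j -> i = j.
Proof.
move=> E; apply/eqP; rewrite eqn_leq; apply/andP; split.
  by apply/dv_pow; rewrite -E; exists 1; rewrite mul1r.
by apply/dv_pow; rewrite E; exists 1; rewrite mul1r.
Qed.

Lemma index_unique (L : O -> Prop) n1 n2 :
  submodule L -> has_index L n1 -> has_index L n2 -> n1 = n2.
Proof.
move=> sL.
suff H : forall n1 n2, has_index L n1 -> has_index L n2 -> (n1 <= n2)%N.
  by move=> h1 h2; apply/eqP; rewrite eqn_leq !H.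
move=> {}n1 {}n2 [s1 [_ [c1 i1]]] [s2 [_ [c2 _]]].
have H : forall i : 'I_n1, {j : 'I_n2 | L (nth 0 s1 i - nth 0 s2 j)}.
  move=> i; apply: constructive_indefinite_description.
  have [j [jlt Hj]] := c2 (nth 0 s1 i); by exists (Ordinal jlt).
pose f i := sval (H i).
have finj : injective f.
  move=> i i' E; apply: val_inj; apply: (i1 _ _ (ltn_ord i) (ltn_ord i')).
  have h1 := svalP (H i); have h2 := svalP (H i'); rewrite -/(f i) in h1.
  rewrite -/(f i') -E in h2.
  have := sub_closed sL h1 h2.
  have E3 : forall a b c : O, a - b - (c - b) = a - c by move=> *; ring.
  by rewrite E3.
by have := leq_card f finj; rewrite !card_ord.
Qed.

Lemma has_index_fun (L : O -> Prop) n (g : nat -> O) :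
  (forall x, exists i, (i < n)%N /\ L (x - g i)) ->
  (forall i j, (i < n)%N -> (j < n)%N -> L (g i - g j) -> i = j) ->
  has_index L n.
Proof.
move=> c ir; exists (mkseq g n); rewrite size_mkseq; split => //; split.
  move=> x; have [i [lt Hi]] := c x; exists i; by rewrite nth_mkseq.
by move=> i j lti ltj; rewrite !nth_mkseq //; apply: ir.
Qed.

Lemma index_dv q : has_index (divides pi) q -> forall k, has_index (dv k) (q ^ k)%N.
Proof.
move=> [s [sz [cs irs]]]; elim=> [|k [u [szu [cu iu]]]].
  apply: (@has_index_fun _ _ (fun _ => 0)).
    by move=> x; exists 0%N; split => //; apply: dv0.
  by move=> i j; rewrite expn0 !ltnS !leqn0 => /eqP -> /eqP ->.
have q0 : (0 < q)%N.
  rewrite lt0n; apply/eqP => q0; have [i [lt _]] := cs 0; by rewrite q0 in lt.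
apply: (@has_index_fun _ _ (fun n => nth 0 s (n %% q) + pi * nth 0 u (n %/ q))).
  move=> x; have [i [lti [r Hr]]] := cs x; have [j [ltj [r' Hr']]] := cu r.
  exists (i + j * q)%N; split.
    apply: (@leq_trans (j.+1 * q)%N); first by rewrite mulSn ltn_add2r.
    by rewrite expnS mulnC leq_mul2l ltj orbT.
  have -> : ((i + j * q) %% q)%N = i by rewrite addnC modnMDl modn_small.
  have -> : ((i + j * q) %/ q)%N = j by rewrite divnDMl // divn_small.
  exists r'; rewrite exprS; have Hx : x = nth 0 s i + r * pi by rewrite -Hr; ring.
  have E4 : x - (nth 0 s i + pi * nth 0 u j) = pi * (r - nth 0 u j) by rewrite Hx; ring.
  by rewrite E4 Hr'; ring.

move=> n n' ltn ltn' H.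
have E1 : (n %% q)%N = (n' %% q)%N.
  apply: irs; rewrite ?ltn_mod //.
  case: H => r Hr; exists (r * pi ^+ k + nth 0 u (n' %/ q) - nth 0 u (n %/ q)).
  move: Hr; rewrite exprS => Hr.
  have : nth 0 s (n %% q) - nth 0 s (n' %% q) = r * (pi * pi ^+ k) - pi * (nth 0 u (n %/ q) - nth 0 u (n' %/ q)).
    rewrite -Hr; ring.
  move=> ->; ring.
have E2 : (n %/ q)%N = (n' %/ q)%N.
  apply: iu; rewrite ?ltn_divLR // -?expnS ?[(_ * q)%N]mulnC -?expnS //.
  case: H => r Hr; exists r; apply: (@mulfI _ pi) => //.
  rewrite E1 in Hr.
  have -> : pi * (nth 0 u (n %/ q) - nth 0 u (n' %/ q)) =
     nth 0 s (n' %% q) + pi * nth 0 u (n %/ q) - (nth 0 s (n' %% q) + pi * nth 0 u (n' %/ q)) by ring.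
  rewrite Hr exprS; ring.
by rewrite (divn_eq n q) (divn_eq n' q) E1 E2.
Qed.

Lemma q_ge2 q : has_index (divides pi) q -> (2 <= q)%N.
Proof.
move=> [s [sz [cs irs]]].
case: q sz cs irs => [|[|q]] // sz cs irs.
  by have [i [lt _]] := cs 0.
exfalso.
have [i [lti [r Hr]]] := cs 1; have [j [ltj [r' Hr']]] := cs 0.
move: lti ltj; rewrite !ltnS !leqn0 => /eqP ei /eqP ej; subst i j.
rewrite sub0r in Hr'.
have : 1 = (r - r') * pi by rewrite mulrBl -Hr -Hr'; ring.
move=> E; have : (r - r') * pi \is a GRing.unit by rewrite -E unitr1.
by rewrite unitrM => /andP [_ pu]; move: pinu; rewrite pu.
Qed.

Lemma classify (L : O -> Prop) n :
  submodule L -> has_index L n -> exists k, forall x, L x <-> dv k x.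
Proof.
move=> sL hL; have [L0 [_ Lmul]] := sL.
have [[x [Lx x0]]|nz] := classic (exists x, L x /\ x <> 0).
  have [u [j [uu Ex]]] := fact (introN eqP x0); rewrite Ex in Lx.
  have Lj : L (pi ^+ j).
    by have := Lmul u^-1 _ Lx; rewrite mulrA mulVr // mul1r.
  have [k [Lk mk]] := ex_min_prop (ex_intro (fun j => L (pi ^+ j)) j Lj).
  exists k => y; split.
    have [->|y0] := eqVneq y 0; first by exists 0; rewrite mul0r.
    have [u' [j' [uu' ->]]] := fact y0 => Ly.
    apply: dv_mulpow; apply: mk.
    by have := Lmul u'^-1 _ Ly; rewrite mulrA mulVr // mul1r.
  by move=> [r ->]; apply: Lmul.
exfalso; have [s [sz [cs _]]] := hL.
have Hin : forall i : 'I_n.+1, (index (pi ^+ i) s < n)%N.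
  move=> i; have [j [ltj Hj]] := cs (pi ^+ i).
  have E : pi ^+ i = nth 0 s j.
    apply/eqP; rewrite -subr_eq0; apply/eqP; apply: NNPP => ne; apply: nz.
    by exists (pi ^+ i - nth 0 s j).
  suff : (index (pi ^+ i) s < size s)%N by rewrite sz.
  by rewrite index_mem E mem_nth // sz.
pose f (i : 'I_n.+1) : 'I_n := Ordinal (Hin i).
have finj : injective f.
  move=> i i' E; have : val (f i) = val (f i') by rewrite E.
  move=> /= E2; apply: val_inj; apply: pow_inj.
  have m1 : pi ^+ i \in s by rewrite -index_mem sz (Hin i).
  have m2 : pi ^+ i' \in s by rewrite -index_mem sz (Hin i').
  by rewrite -(nth_index 0 m1) -(nth_index 0 m2) E2.
by have := leq_card f finj; rewrite !card_ord ltnn.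
Qed.

End Alg.

Lemma In_mem (T : eqType) (x : T) (s : seq T) : List.In x s <-> x \in s.
Proof.
elim: s => [|y s IH] //=; rewrite in_cons; split.
  by move=> [->|/IH ->]; rewrite ?eqxx ?orbT.
by move=> /orP [/eqP ->|/IH]; [left|right].
Qed.

Lemma NoDup_map_uniq (T : eqType) U (h : T -> U) (s : seq T) :
  uniq s -> {in s &, injective h} -> NoDup (map h s).
Proof.
elim: s => [|x s IH] /=; first by constructor.
move=> /andP [xs us] inj; constructor.
  move/in_map_iff => [y [hy /In_mem ys]].
  have := inj y x; rewrite in_cons ys orbT inE eqxx => /(_ isT isT hy) E.
  by move: xs; rewrite -E ys.
apply: IH => // y z ys zs; apply: inj; by rewrite in_cons ?ys ?zs orbT.
Qed.

Section Count.
Variable O : idomainType.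
Variable pi : O.
Hypothesis pi0 : (pi != 0)%R.
Hypothesis pinu : pi \isn't a GRing.unit.
Hypothesis fact : forall x : O, x != 0%R -> exists u k, u \is a GRing.unit /\ x = (u * pi ^+ k)%R.
Variable q : nat.
Hypothesis hq : has_index (divides pi) q.
Variable m : nat.

Definition boxb B (f : {ffun 'I_m.+1 -> 'I_B}) : bool := [forall j, (f j <= f ord0)%N].
Definition wt B (f : {ffun 'I_m.+1 -> 'I_B}) : nat := (\sum_i f i)%N.
Definition Sset N := [set f : {ffun 'I_m.+1 -> 'I_N.+1} | boxb f && (q ^ wt f == N)%N].
Definition cnt N := #|Sset N|.
Definition toL N (f : {ffun 'I_m.+1 -> 'I_N.+1}) : 'I_m.+1 -> O -> Prop :=
  fun i x => dv pi (f i) x.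

Lemma card_set_ok N :
  card_set (fun L : 'I_m.+1 -> O -> Prop => star_subrep L /\ total_index L N) (cnt N).
Proof.
have q2 := q_ge2 pinu hq.
exists (map (@toL N) (enum (Sset N))); split; [|split].
- apply: NoDup_map_uniq; first exact: enum_uniq.
  move=> f g _ _ E; apply/ffunP => i; apply: val_inj; apply/eqP; rewrite eqn_leq.
  have E' : dv pi (f i) = dv pi (g i) := f_equal (fun L => L i) E.
  apply/andP; split.
    have : dv pi (f i) (pi ^+ (g i)) by rewrite E'; apply/(dv_pow pi0 pinu).
    by move/(dv_pow pi0 pinu).
  have : dv pi (g i) (pi ^+ (f i)) by rewrite -E'; apply/(dv_pow pi0 pinu).
  by move/(dv_pow pi0 pinu).
- by rewrite /cnt cardE; apply: size_map.
move=> L; split.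
- move=> [[sL sinc] [n [hn pn]]].
  have H : forall i, {k : nat | forall x, L i x <-> dv pi k x}.
    move=> i; apply: constructive_indefinite_description.
    exact: (classify pi0 pinu fact (sL i) (hn i)).
  pose k i := sval (H i).
  have Lk : forall i, L i = dv pi (k i).
    move=> i; apply: functional_extensionality => x; apply: propositional_extensionality.
    exact: (svalP (H i) x).
  have nk : forall i, n i = (q ^ k i)%N.
    move=> i; apply: (index_unique (sL i) (hn i)); rewrite Lk; exact: index_dv.
  have NE : N = (q ^ (\sum_i k i))%N by rewrite -pn expn_sum; apply: eq_bigr => i _; rewrite nk.
  have kb : forall i, (k i < N.+1)%N.
    move=> i; rewrite ltnS NE; apply: leq_trans (ltnW (ltn_expl _ q2)).
    by rewrite (bigD1 i) //= leq_addr.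
  pose f := [ffun i => (inord (k i) : 'I_N.+1)].
  have fk : forall i, nat_of_ord (f i) = k i by move=> i; rewrite ffunE inordK.
  apply/in_map_iff; exists f; split.
    apply: functional_extensionality => i; rewrite /toL fk; by rewrite Lk.
  apply/In_mem; rewrite mem_enum inE; apply/andP; split.
    apply/forallP => j; rewrite !fk.
    have [->|ne] := eqVneq j ord0; first by [].
    have : L j (pi ^+ k ord0)%R.
      apply: (sinc ord0) => //; first by move=> E; move: ne; rewrite E eqxx.
      by rewrite Lk; apply/(dv_pow pi0 pinu).
    by rewrite Lk => /(dv_pow pi0 pinu).
  apply/eqP; rewrite /wt (eq_bigr k (fun i _ => fk i)); exact/esym.
- move/in_map_iff => [f [<- /In_mem]]; rewrite mem_enum inE => /andP [bf /eqP wf].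
  split.
    split; first by move=> i; apply: submodule_dv.
    move=> i j i0 _ x; rewrite /toL; apply: dv_mono.
    have -> : i = ord0 by apply: val_inj.
    exact: (forallP bf j).
  exists (fun i => q ^ f i)%N; split.
    by move=> i; apply: index_dv.
  by rewrite -expn_sum; exact: wf.
Qed.
End Count.
Section Sort.
Variable m : nat.
Implicit Types (g : 'I_m -> nat) (w : 'S_m).

Definition relg g : rel 'I_m := fun x y => (g y < g x)%N || ((g x == g y) && (x <= y)%N).

Lemma relg_total g : total (relg g).
Proof.
move=> x y; rewrite /relg; have [h|h|E] := ltngtP (g y) (g x).
- by [].
- by [].
- by move: (leq_total x y); case: (x <= y)%N; case: (y <= x)%N.
Qed.

Lemma relg_trans g : transitive (relg g).
Proof.
move=> y x z; rewrite /relg => /orP [h1|/andP [/eqP e1 l1]] /orP [h2|/andP [/eqP e2 l2]].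
- by rewrite (ltn_trans h2 h1).
- by rewrite -e2 h1.
- by rewrite e1 h2.
- by rewrite e1 e2 eqxx (leq_trans l1 l2) orbT.
Qed.

Lemma relg_anti g : antisymmetric (relg g).
Proof.
move=> x y /andP []; rewrite /relg => /orP [h1|/andP [/eqP e1 l1]] /orP [h2|/andP [/eqP e2 l2]].
- by move: (ltn_trans h1 h2); rewrite ltnn.
- by move: h1; rewrite e2 ltnn.
- by move: h2; rewrite e1 ltnn.
- by apply: val_inj; apply/eqP; rewrite eqn_leq l1 l2.
Qed.

Definition compat w g := sorted (relg g) [seq w i | i <- enum 'I_m].

Definition sseq g := sort (relg g) (enum 'I_m).

Lemma sseq_size g : size (sseq g) = m.
Proof. by rewrite /sseq size_sort size_enum_ord. Qed.

Lemma sseq_uniq g : uniq (sseq g).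
Proof. by rewrite /sseq sort_uniq enum_uniq. Qed.

Definition sfun g (i : 'I_m) : 'I_m := nth i (sseq g) i.

Lemma sfun_inj g : injective (sfun g).
Proof.
move=> i j; rewrite /sfun => E.
have E' : nth i (sseq g) i = nth i (sseq g) j by rewrite E (set_nth_default i) // sseq_size.
have := @nth_uniq _ i (sseq g) i j; rewrite sseq_size E' eqxx.
move=> /(_ (ltn_ord i) (ltn_ord j) (sseq_uniq g)) /esym /eqP; exact: val_inj.
Qed.

Definition sortperm g : 'S_m := perm (@sfun_inj g).

Lemma sortperm_map g : [seq sortperm g i | i <- enum 'I_m] = sseq g.
Proof.
have sz : size [seq sortperm g i | i <- enum 'I_m] = size (sseq g).
  by rewrite size_map size_enum_ord sseq_size.
case Em: (enum 'I_m) => [|x0 e'].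
  by apply/esym/eqP; rewrite -size_eq0 sseq_size; have := size_enum_ord m; rewrite Em /= => <-.
rewrite -Em; apply: (eq_from_nth (x0:=x0)) => // j; rewrite size_map size_enum_ord => jm.
rewrite (nth_map x0) ?size_enum_ord // permE /sfun.
have -> : nth x0 (enum 'I_m) j = Ordinal jm by apply: val_inj; rewrite /= nth_enum_ord.
by rewrite /= (set_nth_default x0) // sseq_size.
Qed.

Lemma compat_sortperm g : compat (sortperm g) g.
Proof. by rewrite /compat sortperm_map /sseq; apply: sort_sorted; apply: relg_total. Qed.

Lemma compat_unique w g : compat w g -> w = sortperm g.
Proof.
move=> cw.
have pe : forall w', perm_eq [seq w' i | i <- enum 'I_m] (enum 'I_m).
  move=> w'; apply: uniq_perm.
  - rewrite map_inj_uniq ?enum_uniq //; exact: perm_inj.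
  - exact: enum_uniq.
  move=> x; rewrite mem_enum; apply/mapP; exists (w'^-1 x)%g; rewrite ?mem_enum //.
  by rewrite permKV.
have E : [seq w i | i <- enum 'I_m] = [seq sortperm g i | i <- enum 'I_m].
  apply: (sorted_eq (@relg_trans g) (@relg_anti g)) => //; first exact: compat_sortperm.
  by apply: (perm_trans (pe w)); rewrite perm_sym.
apply/permP => i; have : i \in enum 'I_m by rewrite mem_enum.
by move: i; apply/eq_in_map.
Qed.

End Sort.

Lemma nth_map_enum m (w : 'S_m) x0 i (lt : (i < m)%N) :
  nth x0 [seq w j | j <- enum 'I_m] i = w (Ordinal lt).
Proof.
rewrite (nth_map x0).
 2: rewrite size_enum_ord; exact: lt.
apply: f_equal; apply: val_inj; rewrite /= nth_enum_ord //.
Qed.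

Lemma compat_adj m (w : 'S_m) g : compat w g ->
  forall i (lt2 : (i.+1 < m)%N), relg g (w (Ordinal (ltnW lt2))) (w (Ordinal lt2)).
Proof.
move=> c i lt2; move/(sortedP (w (Ordinal lt2))): c; rewrite size_map size_enum_ord.
by move=> /(_ i lt2); rewrite (nth_map_enum _ _ (ltnW lt2)) (nth_map_enum _ _ lt2).
Qed.

Lemma adj_compat m (w : 'S_m) g :
  (forall i (lt2 : (i.+1 < m)%N), relg g (w (Ordinal (ltnW lt2))) (w (Ordinal lt2))) ->
  compat w g.
Proof.
case: m w g => [|m'] w g H.
  by rewrite /compat; case: (enum 'I_0) => // x; case: x.
apply/(sortedP (w ord0)); rewrite size_map size_enum_ord => i lt2.
by rewrite (nth_map_enum _ _ (ltnW lt2)) (nth_map_enum _ _ lt2).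
Qed.

Lemma sum_suffix n (F : nat -> nat) :
  (\sum_(0 <= p < n) \sum_(p <= i < n) F i = \sum_(0 <= i < n) i.+1 * F i)%N.
Proof.
elim: n => [|n IH]; first by rewrite !big_geq.
rewrite big_nat_recr //= [X in (_ = X)]big_nat_recr //= -IH.
rewrite big_nat1.
have -> : (\sum_(0 <= p < n) \sum_(p <= i < n.+1) F i =
   \sum_(0 <= p < n) \sum_(p <= i < n) F i + \sum_(0 <= p < n) F n)%N.
  rewrite -big_split /=; apply: eq_big_nat => p /andP [_ pn].
  by rewrite big_nat_recr // ltnW.
by rewrite sum_nat_const_nat subn0 -addnA mulSn [(F n + _)%N]addnC.
Qed.

Section Chain.
Variable m : nat.
Variable w : 'S_m.

Definition sigp : 'S_m.+1 := lift_perm ord0 ord0 w.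
Definition desc (j : nat) : bool := [exists i : 'I_m, (val i == j) && is_descent w i].
Definition Ep (p : nat) : nat := ((0 < p) && desc p.-1 : bool).
Definition ew : nat := (des w + maj w)%N.

Implicit Types (f : 'I_m.+1 -> nat) (dn : nat -> nat).

Definition Vn f (p : nat) : nat := if (p < m.+1)%N then f (sigp (inord p)) else 0%N.
Definition gf f : 'I_m -> nat := fun j => f (lift ord0 j).
Definition boxp f := forall j, (f j <= f ord0)%N.
Definition psi f (p : nat) : nat := (Vn f p - Vn f p.+1 - Ep p)%N.
Definition Vd dn (p : nat) : nat := (\sum_(p <= i < m.+1) (dn i + Ep i))%N.
Definition phi dn (x : 'I_m.+1) : nat := Vd dn (sigp^-1 x)%g.

Lemma sig0 : sigp ord0 = ord0.
Proof. exact: lift_perm_id. Qed.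

Lemma sigV0 : (sigp^-1)%g ord0 = ord0.
Proof. by rewrite -{1}sig0 permK. Qed.

Lemma sig_lift j : sigp (lift ord0 j) = lift ord0 (w j).
Proof. exact: lift_perm_lift. Qed.

Lemma sigV_lift j : (sigp^-1)%g (lift ord0 (w j)) = lift ord0 j.
Proof. by rewrite -sig_lift permK. Qed.

Lemma Vd_rec dn p : (p < m.+1)%N -> Vd dn p = (dn p + Ep p + Vd dn p.+1)%N.
Proof. by move=> lt; rewrite /Vd big_ltn. Qed.

Lemma Vd_end dn : Vd dn m.+1 = 0%N.
Proof. by rewrite /Vd big_geq. Qed.

Lemma Vn_end f : Vn f m.+1 = 0%N.
Proof. by rewrite /Vn ltnn. Qed.

Lemma Vn_lift f (j : 'I_m) : Vn f j.+1 = gf f (w j).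
Proof.
rewrite /Vn ltnS ltn_ord /gf -sig_lift; congr (f (sigp _)).
by apply: val_inj; rewrite /= inordK ?lift0 // ltnS ltn_ord.
Qed.

Lemma Vn0 f : Vn f 0 = f ord0.
Proof. rewrite /Vn /=; have -> : (inord 0 : 'I_m.+1) = ord0 by apply: val_inj; rewrite /= inordK.
by rewrite sig0. Qed.

Lemma desc_ord (j : 'I_m) : desc j = is_descent w j.
Proof.
apply/existsP/idP => [[i /andP [/eqP E D]]|D]; last by exists j; rewrite eqxx.
have Eij : j = i by apply: val_inj; exact/esym.
by rewrite Eij.
Qed.

Lemma desc_last j : (m <= j.+1)%N -> desc j = false.
Proof.
move=> le; apply/negbTE/negP => /existsP [i /andP [/eqP E /existsP [k /andP [/eqP Ek _]]]].
have := ltn_ord k; rewrite Ek E ltnNge; by rewrite le.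
Qed.

Lemma chain_of_compat f : boxp f -> compat w (gf f) ->
  forall p, (p < m.+1)%N -> (Vn f p.+1 + Ep p <= Vn f p)%N.
Proof.
move=> bf cf [|p] lt.
  rewrite /Ep /= addn0 Vn0; rewrite /Vn; case: ifP => // _; exact: bf.
rewrite ltnS in lt.
have Hp := Vn_lift f (Ordinal lt); rewrite /= in Hp; rewrite Hp /Ep /= (desc_ord (Ordinal lt)).
case: (ltnP p.+1 m) => [lt2|ge].
  have Hp2 := Vn_lift f (Ordinal lt2); rewrite /= in Hp2; rewrite Hp2.
  have := compat_adj cf lt2.
  have -> : Ordinal (ltnW lt2) = Ordinal lt by apply: val_inj.
  rewrite /relg => /orP [h|/andP [/eqP h le]].
    by case: (is_descent _ _); rewrite ?addn0 ?addn1 // ltnW.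
  rewrite h; case D: (is_descent _ _); rewrite ?addn0 //.
  move/existsP: D => [k /andP [/eqP Ek lk]].
  have Ek2 : k = Ordinal lt2 by apply: val_inj.
  rewrite Ek2 in lk.
  by move: le; rewrite leqNgt lk.
have -> : is_descent w (Ordinal lt) = false by rewrite -desc_ord desc_last.
have -> : p.+2 = m.+1 by apply/eqP; rewrite eqn_leq !ltnS ge lt.
by rewrite Vn_end.
Qed.

Lemma chain_repr f : (forall p, (p < m.+1)%N -> (Vn f p.+1 + Ep p <= Vn f p)%N) ->
  forall p, (p <= m.+1)%N -> Vn f p = Vd (psi f) p.
Proof.
move=> H p le.
move: (subnK le); move: (m.+1 - p)%N => r; elim: r p {le} => [|r IH] p.
  by rewrite add0n => ->; rewrite Vn_end Vd_end.
move=> E; have lt : (p < m.+1)%N by rewrite -E addSn ltnS leq_addl.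
rewrite Vd_rec // -IH; last by rewrite addnS.
have := H p lt; rewrite /psi; lia.
Qed.

Lemma Vn_phi dn p : (p < m.+1)%N -> Vn (phi dn) p = Vd dn p.
Proof. by move=> lt; rewrite /Vn lt /phi permK inordK. Qed.

Lemma Vn_phi_all dn p : (p <= m.+1)%N -> Vn (phi dn) p = Vd dn p.
Proof.
rewrite leq_eqVlt => /orP [/eqP ->|]; last exact: Vn_phi.
by rewrite Vn_end Vd_end.
Qed.

Lemma psi_phi dn p : (p < m.+1)%N -> psi (phi dn) p = dn p.
Proof.
move=> lt; rewrite /psi Vn_phi // Vn_phi_all // Vd_rec //; lia.
Qed.

Lemma Vd_le dn p : (p <= m.+1)%N -> (Vd dn p <= Vd dn 0)%N.
Proof. by move=> le; rewrite /Vd (big_cat_nat (leq0n p) le) leq_addl. Qed.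

Lemma box_phi dn : boxp (phi dn).
Proof. move=> j; rewrite /phi sigV0; apply: Vd_le; exact: ltnW. Qed.

Lemma compat_phi dn : compat w (gf (phi dn)).
Proof.
apply: adj_compat => i lt2; have lt : (i < m)%N by apply: ltnW.
have -> : Ordinal (ltnW lt2) = Ordinal lt by apply: val_inj.
rewrite /relg -(Vn_lift _ (Ordinal lt)) -(Vn_lift _ (Ordinal lt2)) /=. rewrite (Vn_phi dn (p := i.+1)) ?ltnS // (Vn_phi dn (p := i.+2)) ?ltnS //.
rewrite (Vd_rec dn (p := i.+1)) ?ltnS //.
rewrite /relg /Ep /= (desc_ord (Ordinal lt)).
case D: (is_descent w (Ordinal lt)).
  by apply/orP; left; rewrite addn1; lia.
rewrite addn0; case: (ltnP (Vd dn i.+2) (dn i.+1 + Vd dn i.+2)) => //= h.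
have -> : dn i.+1 = 0%N by move: h; rewrite -{2}[Vd dn i.+2]add0n leq_add2r leqn0 => /eqP.
rewrite add0n eqxx /= leqNgt; apply/negP => l.
move: D; rewrite /is_descent => /negbT/existsPn /(_ (Ordinal lt2)); by rewrite /= eqxx l.
Qed.

Lemma wt_sig f : (\sum_x f x = \sum_(0 <= p < m.+1) Vn f p)%N.
Proof.
rewrite (reindex_inj (@perm_inj _ sigp)) /= big_mkord; apply: eq_bigr => p _.
by rewrite /Vn ltn_ord inord_val.
Qed.

Lemma sumE : (\sum_(0 <= i < m.+1) i.+1 * Ep i = ew)%N.
Proof.
rewrite big_ltn // /Ep /= muln0 add0n big_add1 /= big_mkord.
rewrite /ew /des /maj.
have -> : (\sum_(i < m) i.+2 * desc i = \sum_(i < m | is_descent w i) i.+2)%N.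
  rewrite [RHS]big_mkcond /=; apply: eq_bigr => i _; rewrite desc_ord.
  case: (is_descent _ _); [exact: muln1 | exact: muln0].
have -> : #|[set j | is_descent w j]| = (\sum_(j < m | is_descent w j) 1)%N.
  by rewrite sum1_card; apply: eq_card => j; rewrite inE.
rewrite -big_split; apply: eq_bigr => j _ /=; lia.
Qed.
Lemma wt_phi dn : (\sum_x phi dn x = \sum_(0 <= i < m.+1) i.+1 * dn i + ew)%N.
Proof.
rewrite wt_sig.
have -> : (\sum_(0 <= p < m.+1) Vn (phi dn) p = \sum_(0 <= p < m.+1) Vd dn p)%N.
  by apply: eq_big_nat => p /andP [_ lt]; rewrite Vn_phi.
rewrite /Vd sum_suffix -sumE.
rewrite (eq_bigr (fun i => i.+1 * dn i + i.+1 * Ep i)%N); last by move=> i _; exact: mulnDr.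
exact: big_split.
Qed.

Lemma wt_compat f : boxp f -> compat w (gf f) ->
  (\sum_x f x = \sum_(0 <= i < m.+1) i.+1 * psi f i + ew)%N.
Proof.
move=> bf cf; have H := chain_repr (chain_of_compat bf cf).
rewrite wt_sig.
have -> : (\sum_(0 <= p < m.+1) Vn f p = \sum_(0 <= p < m.+1) Vd (psi f) p)%N.
  by apply: eq_big_nat => p /andP [_ lt]; rewrite H // ltnW.
rewrite /Vd sum_suffix -sumE.
rewrite (eq_bigr (fun i => i.+1 * psi f i + i.+1 * Ep i)%N); last by move=> i _; exact: mulnDr.
exact: big_split.
Qed.

Lemma phi_psi f : boxp f -> compat w (gf f) -> forall x, phi (psi f) x = f x.
Proof.
move=> bf cf x; have H := chain_repr (chain_of_compat bf cf).
rewrite /phi -H; last exact: ltnW.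
by rewrite /Vn ltn_ord inord_val permKV.
Qed.

Lemma psi_le f p : (psi f p <= Vn f p)%N.
Proof. rewrite /psi; lia. Qed.

Lemma Vn_le f p B : (forall x, f x <= B)%N -> (Vn f p <= B)%N.
Proof. by move=> H; rewrite /Vn; case: ifP. Qed.

Lemma Vd_bound dn p B : (forall i, (i < m.+1)%N -> dn i <= B)%N -> (Vd dn p <= m.+1 * B.+1)%N.
Proof.
move=> H; apply: (@leq_trans (Vd dn 0)); first by case: (leqP p m.+1) => [le|lt]; [exact: Vd_le|rewrite /Vd big_geq // ltnW].
rewrite /Vd -[m.+1]subn0 -sum_nat_const_nat big_nat_cond [X in (_ <= X)%N]big_nat_cond.
apply: leq_sum => i /andP [/andP [_ lt] _].
rewrite /Ep; case: (_ && _); rewrite ?addn0 ?addn1 ?ltnS; [exact: H | apply: leqW; exact: H].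
Qed.
End Chain.

Section Real.
Local Open Scope ring_scope.

Lemma sum_inj_le (A B : finType) (P : pred A) (Q : pred B) (h : A -> B) (F : B -> R) :
  {in P &, injective h} -> (forall x, P x -> Q (h x)) -> (forall y, 0 <= F y) ->
  \sum_(x | P x) F (h x) <= \sum_(y | Q y) F y.
Proof.
move=> inj PQ F0.
rewrite -(big_imset _ inj) /= big_mkcond [X in _ <= X]big_mkcond /=.
apply: ler_sum => y _; case: ifP => [/imsetP [x Px ->]|_]; first by rewrite PQ.
by case: ifP.
Qed.

Lemma cv_const c : Un_cv (fun _ => c) c.
Proof.
move=> e e0; exists 0%N => n _; rewrite /Rdist Rminus_eq_0 Rabs_R0; exact: e0.
Qed.

Lemma cv_ext (u v : nat -> R) l : (forall n, u n = v n) -> Un_cv u l -> Un_cv v l.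
Proof. by move=> E H e e0; have [N HN] := H e e0; exists N => n nN; rewrite -E; apply: HN. Qed.

Lemma cv_sum (I : Type) (r : seq I) (u : I -> nat -> R) (l : I -> R) :
  (forall i, Un_cv (u i) (l i)) ->
  Un_cv (fun n => \sum_(i <- r) u i n) (\sum_(i <- r) l i).
Proof.
move=> H; elim: r => [|i r IH].
  rewrite big_nil; apply: (cv_ext (u := fun _ => 0)) => [n|]; [by rewrite big_nil|exact: cv_const].
rewrite big_cons; apply: (cv_ext _ (CV_plus _ _ _ _ (H i) IH)) => n.
by rewrite big_cons.
Qed.

Lemma cv_prod (I : Type) (r : seq I) (u : I -> nat -> R) (l : I -> R) :
  (forall i, Un_cv (u i) (l i)) ->
  Un_cv (fun n => \prod_(i <- r) u i n) (\prod_(i <- r) l i).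
Proof.
move=> H; elim: r => [|i r IH].
  rewrite big_nil; apply: (cv_ext (u := fun _ => 1)) => [n|]; [by rewrite big_nil|exact: cv_const].
rewrite big_cons; apply: (cv_ext _ (CV_mult _ _ _ _ (H i) IH)) => n.
by rewrite big_cons.
Qed.

Lemma geo_eq (x : R) n : (1 - x) * \sum_(j < n) x ^+ j = 1 - x ^+ n.
Proof.
elim: n => [|n IH]; first by rewrite big_ord0 expr0 mulr0 subrr.
by rewrite big_ord_recr /= mulrDr IH exprS; ring.
Qed.

Lemma geo_le (x : R) n : 0 <= x -> x < 1 -> \sum_(j < n) x ^+ j <= (1 - x)^-1.
Proof.
move=> x0 x1; have p : 0 < 1 - x by rewrite subr_gt0.
rewrite -(ler_pM2l p) mulfV ?gt_eqF // geo_eq gerBl.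
exact: exprn_ge0.
Qed.

Lemma geo_cv (x : R) : 0 <= x -> x < 1 -> Un_cv (fun b => \sum_(j < b.+1) x ^+ j) ((1 - x)^-1).
Proof.
move=> x0 x1 e e0.
have ax : Rabs x < 1 by rewrite RabsE ger0_norm.
have ax' : Rlt (Rabs x) 1 by apply/RltP.
have [N HN] := GP_infinite x ax' e e0.
exists N => n nN; have := HN n nN.
rewrite sum_f_R0E big_mkord RinvE.
have E : \sum_(i < n.+1) Rmult 1 (pow x i) = \sum_(j < n.+1) x ^+ j.
  apply: eq_bigr => i _ /=; rewrite RpowE; exact: mul1r.
by move=> H; rewrite E RminusE in H.
Qed.

Variable m : nat.
Variable t : R.
Hypothesis t0 : 0 < t.
Hypothesis t1 : t < 1.

Definition fvals B (f : {ffun 'I_m.+1 -> 'I_B}) : 'I_m.+1 -> nat := fun x => nat_of_ord (f x).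
Definition dnf B (d : {ffun 'I_m.+1 -> 'I_B}) : nat -> nat := fun i => nat_of_ord (d (inord i)).

Definition T b := \sum_(f : {ffun 'I_m.+1 -> 'I_b.+1} | boxb f) t ^+ wt f.
Definition Tw b (w : 'S_m) :=
  \sum_(f : {ffun 'I_m.+1 -> 'I_b.+1} | boxb f && (sortperm (gf (fvals f)) == w)) t ^+ wt f.
Definition Uw b (w : 'S_m) :=
  \sum_(d : {ffun 'I_m.+1 -> 'I_b.+1}) t ^+ (\sum_(0 <= i < m.+1) i.+1 * dnf d i + ew w)%N.
Definition Xlim := \sum_(w : 'S_m) t ^+ ew w * \prod_(i < m.+1) (1 - t ^+ i.+1)^-1.

Lemma boxbP B (f : {ffun 'I_m.+1 -> 'I_B}) : boxb f = true <-> boxp (fvals f).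
Proof. by split => [/forallP H j|H]; [exact: H|apply/forallP => j; exact: H]. Qed.

Lemma T_split b : T b = \sum_w Tw b w.
Proof. by rewrite /T (partition_big (fun f => sortperm (gf (fvals f))) predT). Qed.


Lemma tk_lt1 k : t ^+ k.+1 < 1.
Proof. by rewrite exprn_ilt1 // ltW. Qed.

Lemma tk_ge0 k : 0 <= t ^+ k.
Proof. exact: exprn_ge0 (ltW t0). Qed.

Lemma fvals_le b (f : {ffun 'I_m.+1 -> 'I_b.+1}) x : (fvals f x <= b)%N.
Proof. by rewrite /fvals -ltnS ltn_ord. Qed.

Lemma Vd_ext (w : 'S_m) dn1 dn2 p : (forall i, (i < m.+1)%N -> dn1 i = dn2 i) ->
  Vd w dn1 p = Vd w dn2 p.
Proof. move=> H; apply: eq_big_nat => i /andP [_ lt]; by rewrite H. Qed.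

Lemma Tw_Uw b w : Tw b w <= Uw b w.
Proof.
pose h (f : {ffun 'I_m.+1 -> 'I_b.+1}) : {ffun 'I_m.+1 -> 'I_b.+1} :=
  [ffun p : 'I_m.+1 => inord (psi w (fvals f) p)].
have hv : forall f p, (p < m.+1)%N -> dnf (h f) p = psi w (fvals f) p.
  move=> f p lt; rewrite /dnf ffunE inordK // inordK //.
  rewrite ltnS; apply: leq_trans (psi_le _ _ _) _; apply: Vn_le => x; exact: fvals_le.
pose P (f : {ffun 'I_m.+1 -> 'I_b.+1}) := boxb f && (sortperm (gf (fvals f)) == w).
have Pc : forall f, P f -> boxp (fvals f) /\ compat w (gf (fvals f)).
  move=> f /andP [/boxbP bf /eqP sw]; split => //; rewrite -sw; exact: compat_sortperm.
rewrite /Tw (eq_bigr (fun f => t ^+ (\sum_(0 <= i < m.+1) i.+1 * dnf (h f) i + ew w)%N)); last first.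
  move=> f /Pc [bf cf]; congr (t ^+ _).
  have -> : wt f = (\sum_x fvals f x)%N by [].
  rewrite (wt_compat bf cf); congr (_ + _)%N.
  by apply: eq_big_nat => i /andP [_ lt]; rewrite hv.
rewrite /Uw; apply: (@sum_inj_le _ _ P predT h
   (fun d => t ^+ (\sum_(0 <= i < m.+1) i.+1 * dnf d i + ew w)%N)) => //.
- move=> f1 f2 P1 P2 E; have [b1 c1] := Pc _ P1; have [b2 c2] := Pc _ P2.
  apply/ffunP => x; apply: val_inj.
  change (fvals f1 x = fvals f2 x).
  rewrite -(phi_psi b1 c1) -(phi_psi b2 c2) /phi; apply: Vd_ext => i lt.
  by rewrite -!hv // E.
- move=> d; exact: tk_ge0.
Qed.

Lemma Uw_Tw b w : Uw b w <= Tw (m.+1 * b.+1) w.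
Proof.
pose k (d : {ffun 'I_m.+1 -> 'I_b.+1}) : {ffun 'I_m.+1 -> 'I_(m.+1 * b.+1).+1} :=
  [ffun x : 'I_m.+1 => inord (phi w (dnf d) x)].
have dnb : forall (d : {ffun 'I_m.+1 -> 'I_b.+1}) i, (i < m.+1)%N -> (dnf d i <= b)%N.
  by move=> d i _; rewrite /dnf -ltnS ltn_ord.
have kv : forall d, fvals (k d) = phi w (dnf d).
  move=> d; apply: functional_extensionality => x; rewrite /fvals ffunE inordK // ltnS /phi.
  by apply: Vd_bound => i lt; apply: dnb.
rewrite /Uw (eq_bigr (fun d => t ^+ wt (k d))); last first.
  move=> d _; congr (t ^+ _).
  have -> : wt (k d) = (\sum_x fvals (k d) x)%N by [].
  by rewrite kv wt_phi.
apply: (@sum_inj_le _ _ predT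
   (fun f : {ffun 'I_m.+1 -> 'I_(m.+1 * b.+1).+1} => boxb f && (sortperm (gf (fvals f)) == w))
   k (fun f => t ^+ wt f)).
- move=> d1 d2 _ _ E.
  have E2 : phi w (dnf d1) = phi w (dnf d2) by rewrite -!kv E.
  have E3 : forall i, (i < m.+1)%N -> dnf d1 i = dnf d2 i.
    by move=> i lt; rewrite -(psi_phi w (dnf d1) lt) -(psi_phi w (dnf d2) lt) E2.
  apply/ffunP => j; apply: val_inj; have := E3 j (ltn_ord j).
  by rewrite /dnf inord_val.
- move=> d _; apply/andP; split.
    apply/boxbP; rewrite kv; exact: box_phi.
  rewrite kv; apply/eqP/esym; apply: compat_unique; exact: compat_phi.
- move=> f; exact: tk_ge0.
Qed.

Lemma Uw_prod b w :
  Uw b w = t ^+ ew w * \prod_(i < m.+1) \sum_(j < b.+1) (t ^+ i.+1) ^+ j.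
Proof.
rewrite /Uw (eq_bigr (fun d : {ffun 'I_m.+1 -> 'I_b.+1} => t ^+ ew w * \prod_(i < m.+1) (t ^+ i.+1) ^+ (d i))); last first.
  move=> d _; rewrite exprD mulrC; congr (_ * _).
  rewrite big_mkord expr_sum; apply: eq_bigr => i _.
  by rewrite /dnf inord_val -exprM.
by rewrite -mulr_sumr bigA_distr_bigA.
Qed.

Lemma T_le_X b : T b <= Xlim.
Proof.
rewrite T_split /Xlim; apply: ler_sum => w _.
apply: (le_trans (Tw_Uw b w)); rewrite Uw_prod.
apply: ler_wpM2l; first exact: tk_ge0.
apply: ler_prod => i _; apply/andP; split.
  by apply: sumr_ge0 => j _; apply: exprn_ge0; exact: tk_ge0.
apply: geo_le; [exact: tk_ge0 | exact: tk_lt1].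
Qed.

Lemma U_cv : Un_cv (fun b => \sum_w Uw b w) Xlim.
Proof.
apply: (cv_ext (u := fun b => \sum_w (t ^+ ew w *
   \prod_(i < m.+1) \sum_(j < b.+1) (t ^+ i.+1) ^+ j))).
  by move=> n; apply: eq_bigr => w _; rewrite Uw_prod.
apply: cv_sum => w.
have H := cv_prod (index_enum 'I_m.+1) (fun i => geo_cv (tk_ge0 i.+1) (tk_lt1 i)).
exact: (cv_ext _ (CV_mult _ _ _ _ (cv_const (t ^+ ew w)) H)).
Qed.

End Real.

Section Final.
Local Open Scope ring_scope.
Variable m : nat.
Variable q : nat.
Hypothesis q2 : (2 <= q)%N.
Variable s : R.
Hypothesis s0 : Rlt 0 s.
Let t := Rpower (INR q) (Ropp s).

Lemma t_pos : 0 < t.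
Proof. apply/RltP; exact: exp_pos. Qed.

Lemma t_lt1 : t < 1.
Proof.
apply/RltP; rewrite /t /Rpower.
suff h : Rlt (exp (Ropp s * ln (INR q))) (exp 0) by rewrite exp_0 in h.
apply: exp_increasing.
have lq : Rlt 0 (ln (INR q)).
  rewrite -ln_1; apply: ln_increasing; first exact: Rlt_0_1.
  apply/RltP; rewrite INRE ltr1n.
  exact: q2.
have : Rlt 0 (s * ln (INR q)) by apply: Rmult_lt_0_compat.
move/RltP => h; apply/RltP; rewrite RmultE RoppE mulNr oppr_lt0; exact: h.
Qed.

Lemma Rpower_q n : Rpower (INR (q ^ n)) (Ropp s) = t ^+ n.
Proof.
have q0 : Rlt 0 (INR q) by apply/RltP; rewrite INRE ltr0n; apply: leq_trans q2.
rewrite -RpowE -Rpower_pow; last exact/RltP/t_pos.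
rewrite /t Rpower_mult INRE natrX -INRE -RpowE -Rpower_pow // Rpower_mult.
by rewrite Rmult_comm.
Qed.

Definition aterm (k : nat) : R := Rmult (INR (cnt q m k.+1)) (Rpower (INR k.+1) (Ropp s)).

Lemma aterm_sum k : aterm k =
  \sum_(f : {ffun 'I_m.+1 -> 'I_k.+2} | boxb f && (q ^ wt f == k.+1)%N) t ^+ wt f.
Proof.
rewrite /aterm /cnt RmultE INRE.
have -> : \sum_(f : {ffun 'I_m.+1 -> 'I_k.+2} | boxb f && (q ^ wt f == k.+1)%N) t ^+ wt f =
   \sum_(f in Sset q m k.+1) Rpower (INR k.+1) (Ropp s).
  apply: eq_big => f; first by rewrite inE.
  by move=> /andP [_ /eqP E]; rewrite -Rpower_q E.
by rewrite sumr_const mulr_natl.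
Qed.

Definition rs B1 B2 (f : {ffun 'I_m.+1 -> 'I_B1}) : {ffun 'I_m.+1 -> 'I_B2.+1} :=
  [ffun x => inord (f x)].

Lemma rs_val B1 B2 (f : {ffun 'I_m.+1 -> 'I_B1}) x :
  (forall y, (f y <= B2)%N) -> nat_of_ord (rs B2 f x) = f x.
Proof. by move=> H; rewrite ffunE inordK // ltnS. Qed.

Lemma rs_box B1 B2 (f : {ffun 'I_m.+1 -> 'I_B1}) :
  (forall y, (f y <= B2)%N) -> boxb (rs B2 f) = boxb f.
Proof. by move=> H; apply: eq_forallb => j; rewrite !rs_val. Qed.

Lemma rs_wt B1 B2 (f : {ffun 'I_m.+1 -> 'I_B1}) :
  (forall y, (f y <= B2)%N) -> wt (rs B2 f) = wt f.
Proof. by move=> H; apply: eq_bigr => j _; rewrite rs_val. Qed.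

Lemma resize_le B1 B2 (P1 : pred {ffun 'I_m.+1 -> 'I_B1}) (P2 : pred {ffun 'I_m.+1 -> 'I_B2.+1}) :
  (forall f, P1 f -> forall y, (f y <= B2)%N) -> (forall f, P1 f -> P2 (rs B2 f)) ->
  \sum_(f | P1 f) t ^+ wt f <= \sum_(g | P2 g) t ^+ wt g.
Proof.
move=> Hb HP.
rewrite (eq_bigr (fun f => t ^+ wt (rs B2 f))); last by move=> f Pf; rewrite (rs_wt (Hb f Pf)).
apply: sum_inj_le => //.
- move=> f1 f2 P1f P2f E; apply/ffunP => x; apply: val_inj.
  change (nat_of_ord (f1 x) = nat_of_ord (f2 x)).
  by rewrite -(rs_val x (Hb _ P1f)) -(rs_val x (Hb _ P2f)) E.
- move=> g; apply: exprn_ge0; exact: ltW t_pos.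
Qed.

Lemma val_le_wt B (f : {ffun 'I_m.+1 -> 'I_B}) y : (f y <= wt f)%N.
Proof. by rewrite /wt (bigD1 y) //= leq_addr. Qed.

Lemma wt_lt B (f : {ffun 'I_m.+1 -> 'I_B}) : (wt f < q ^ wt f)%N.
Proof. exact: ltn_expl. Qed.

Definition pidx n B (f : {ffun 'I_m.+1 -> 'I_B}) : 'I_n.+1 := inord (q ^ wt f).-1.

Lemma pidx_eq n B (f : {ffun 'I_m.+1 -> 'I_B}) (k : 'I_n.+1) :
  (q ^ wt f <= n.+1)%N -> (pidx n f == k) = (q ^ wt f == k.+1)%N.
Proof.
move=> le; have pos : (0 < q ^ wt f)%N by rewrite expn_gt0; apply/orP; left; apply: leq_trans q2.
rewrite /pidx -val_eqE /= inordK; last by rewrite -ltnS prednK.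
by rewrite -eqSS prednK.
Qed.

Lemma partial_eq n : sum_f_R0 aterm n = \sum_(k < n.+1) aterm k.
Proof. by rewrite sum_f_R0E big_mkord. Qed.

Lemma partial_le n : sum_f_R0 aterm n <= Xlim m t.
Proof.
apply: le_trans (T_le_X m t_pos t_lt1 n).
rewrite partial_eq /T (partition_big (@pidx n _) predT) //=.
apply: ler_sum => k _; rewrite aterm_sum.
apply: resize_le.
- move=> g /andP [_ /eqP E] y; rewrite -ltnS; apply: leq_ltn_trans (val_le_wt g y) _.
  apply: leq_trans (wt_lt g) _; rewrite E; exact: ltn_ord.
- move=> g /andP [bg /eqP E].
  have Hb : forall y, (g y <= n)%N.
    move=> y; rewrite -ltnS; apply: leq_ltn_trans (val_le_wt g y) _.
    apply: leq_trans (wt_lt g) _; rewrite E; exact: ltn_ord.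
  rewrite rs_box // bg /= pidx_eq rs_wt // E //.
Qed.

Lemma partial_ge n B : (q ^ (m.+1 * B) <= n)%N -> T m t B <= sum_f_R0 aterm n.
Proof.
move=> le.
have wb : forall f : {ffun 'I_m.+1 -> 'I_B.+1}, (q ^ wt f <= n.+1)%N.
  move=> f; apply: leqW; apply: (@leq_trans (q ^ (m.+1 * B))) => //.
  apply: leq_pexp2l; first by apply: leq_trans q2.
  apply: (@leq_trans (\sum_(i < m.+1) B)); last by rewrite sum_nat_const card_ord.
  by apply: leq_sum => i _; rewrite -ltnS ltn_ord.
rewrite partial_eq /T (partition_big (@pidx n _) predT) //=.
apply: ler_sum => k _; rewrite aterm_sum.
apply: resize_le.
- move=> f /andP [_]; rewrite pidx_eq // => /eqP E y; apply: leq_trans (val_le_wt f y) _.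
  by apply: ltnW; rewrite -E; exact: wt_lt.
- move=> f /andP [bf]; rewrite pidx_eq // => /eqP E.
  have Hb : forall y, (f y <= k.+1)%N.
    by move=> y; apply: leq_trans (val_le_wt f y) _; apply: ltnW; rewrite -E; exact: wt_lt.
  by rewrite rs_box // bf /= rs_wt // E.
Qed.

Lemma series_cv : infinite_sum aterm (Xlim m t).
Proof.
move=> e e0.
have [N HN] := U_cv m t_pos t_lt1 e0.
have HNN := HN N (le_n N); rewrite RdistE in HNN.
exists (q ^ (m.+1 * (m.+1 * N.+1)))%N => n nN.
have le : (q ^ (m.+1 * (m.+1 * N.+1)) <= n)%N by apply/ssrnat.leP.
have l1 := partial_ge le.
have l2 := partial_le n.
have l3 : \sum_(w : 'S_m) Uw t N w <= T m t (m.+1 * N.+1).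
  rewrite T_split; apply: ler_sum => w _; apply: Uw_Tw; exact: t_pos.
rewrite RdistE; apply/RltP.
have e0' : 0 < e by apply/RltP.
move: HNN => /RltP HNN.
rewrite ler0_norm; last by rewrite subr_le0.
rewrite ltr_norml in HNN; case/andP: HNN => HNN _.
rewrite opprB; lra.
Qed.

End Final.
Local Open Scope ring_scope.

Lemma carlitz_sum m (t : R) : carlitz m t t = \sum_(w : 'S_m) t ^+ ew w.
Proof.
rewrite /carlitz foldrE big_map big_enum /=.
change (\sum_(i in [set: {perm 'I_m}]) Rmult (pow t (des i)) (pow t (maj i)) = \sum_(w : 'S_m) t ^+ ew w).
apply: eq_big => [w|w _]; first by rewrite inE.
by rewrite RmultE !RpowE -exprD.
Qed.

Lemma denom_prod m (t : R) : denom m.+1 t = \prod_(i < m.+1) (1 - t ^+ i.+1).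
Proof.
rewrite /denom foldrE big_map.
change (\prod_(j <- iota 1 m.+1) Rminus 1 (pow t j) = \prod_(i < m.+1) (1 - t ^+ i.+1)).
have -> : iota 1 m.+1 = index_iota 1 m.+2 by rewrite /index_iota subn1.
rewrite big_add1 /= big_mkord; apply: eq_bigr => i _.
by rewrite RminusE RmultE RpowE exprS.
Qed.

Lemma carlitz_eq m (t : R) : Rdiv (carlitz m t t) (denom m.+1 t) = Xlim m t.
Proof.
rewrite carlitz_sum denom_prod RdivE /Xlim -prodfV mulr_suml.
by apply: eq_bigr => w _.
Qed.

Local Close Scope ring_scope.

Theorem proposition3p3 (O : idomainType) (q a : nat) :
  (1 <= a)%N -> compact_dvr_residue O q ->
  forall s : R, Rlt R0 s ->
  let t := Rpower (INR q) (Ropp s) in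
  exists c : nat -> nat,
    (forall N : nat,
       card_set (fun L : 'I_a -> O -> Prop => star_subrep L /\ total_index L N) (c N)) /\
    infinite_sum (fun n : nat => Rmult (INR (c n.+1)) (Rpower (INR n.+1) (Ropp s)))
                 (Rdiv (carlitz (a - 1) t t) (denom a t)).
Proof.
case: a => [//|m] _ [pi [[pi0 [pinu fact]] [_ hq]]] s s0 t.
have pi0' : (pi != 0)%R by apply/eqP.
have pinu' : pi \isn't a GRing.unit by apply/negP.
have fact' : forall x : O, (x != 0)%R -> exists u k, u \is a GRing.unit /\ x = (u * pi ^+ k)%R.
  by move=> x /eqP; exact: fact.
have q2 := q_ge2 pinu' hq.
exists (cnt q m); split.
  move=> N; exact: (card_set_ok pi0' pinu' fact' hq m N).
have -> : (m.+1 - 1)%N = m by rewrite subn1.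
rewrite carlitz_eq.
exact: (series_cv m q2 s0).
Qed.
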